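(* Let $X$ be a periodic commutative semigroup with a unique idempotent $e$. If the maximal subgroup $H_e$ of $X$ is bounded and for every infinite set $A\subseteq X$ the set $AA=\{xy:x,y\in A\}$ is not a singleton, then $X$ is $\mathsf{T_{1}S}$-closed.
   Context: $\mathsf{T_{1}S}$ is the class of topological semigroups satisfying the $T_1$ separation axiom. A semigroup $X$ is $\mathsf{T_{1}S}$-closed if for every isomorphic topological embedding of $X$ (with discrete topology) into some $Y\in\mathsf{T_{1}S}$ the image is closed in $Y$. Periodic: every element has an idempotent power. $H_e$ is the maximal subgroup containing $e$; a group is bounded if some exponent $n\ge1$ satisfies $x^n=e$ for all $x$. *)

(* Defs.v *)
From HB Require Import structures.
From mathcomp Require Import all_boot all_order all_algebra.
From mathcomp Require Import all_classical all_reals topology.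
Set Implicit Arguments. Unset Strict Implicit. Unset Printing Implicit Defensive.
Local Open Scope classical_set_scope.

(* powS mul x n = x^(n+1) *)
Fixpoint powS (X : Type) (mul : X -> X -> X) (x : X) (n : nat) : X :=
  match n with 0 => x | k.+1 => mul (powS mul x k) x end.

Definition idempotent_el (X : Type) (mul : X -> X -> X) (e : X) : Prop :=
  mul e e = e.

Definition periodic (X : Type) (mul : X -> X -> X) : Prop :=
  forall x, exists n, idempotent_el mul (powS mul x n).

Definition is_subgroup_with_id (X : Type) (mul : X -> X -> X) (e : X)
    (G : set X) : Prop :=
  [/\ G e,
      (forall x y, G x -> G y -> G (mul x y)),
      (forall x, G x -> mul e x = x /\ mul x e = x) &
      (forall x, G x -> exists y, [/\ G y, mul x y = e & mul y x = e])].

Definition H_e (X : Type) (mul : X -> X -> X) (e : X) : set X :=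
  [set x | exists G : set X, is_subgroup_with_id mul e G /\ G x].

Definition bounded_group (X : Type) (mul : X -> X -> X) (e : X)
    (G : set X) : Prop :=
  exists n, forall x, G x -> powS mul x n = e.

Definition prodset (X : Type) (mul : X -> X -> X) (A : set X) : set X :=
  [set z | exists x y, [/\ A x, A y & z = mul x y]].

(* Topological semigroup Y (with operation m) satisfying T1;
   X (discrete) embeds isomorphically and topologically via f. *)
Definition T1S_closed (X : Type) (mul : X -> X -> X) : Prop :=
  forall (Y : topologicalType) (m : Y -> Y -> Y),
    associative m ->
    continuous (fun p : Y * Y => m p.1 p.2) ->
    @accessible_space Y ->
    forall f : X -> Y,
      injective f ->
      (forall x y, f (mul x y) = m (f x) (f y)) ->
      (* f is a homeomorphism of the discrete space X onto its image *)
      (forall x, exists U : set Y, open U /\ U `&` range f = [set f x]) ->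
      closed (range f).

(* Main.v *)
Require Import Defs.
From HB Require Import structures.
From mathcomp Require Import all_boot all_order all_algebra.
From mathcomp Require Import all_classical all_reals topology.
From mathcomp Require Import zify.
Local Open Scope classical_set_scope.

Section Pow.
Context (T : Type) (op : T -> T -> T) (opA : associative op).

Lemma powS_add x a b : powS op x (a + b).+1 = op (powS op x a) (powS op x b).
Proof.
elim: b => [|b IH]; first by rewrite addn0.
rewrite addnS; transitivity (op (powS op x (a + b).+1) x) => //.
by rewrite IH -opA.
Qed.

Lemma powS_mulE x a b : powS op (powS op x a) b = powS op x (a * b + a + b).
Proof.
elim: b => [|b IH]; first by rewrite muln0 addn0.
rewrite /= IH -powS_add; congr (powS op x _); lia.
Qed.

Lemma powS_idem x n : op x x = x -> powS op x n = x.
Proof. by move=> h; elim: n => //= n ->. Qed.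

Lemma powS_comm1 x n : op x (powS op x n) = powS op x n.+1.
Proof. by rewrite -(powS_add x 0 n) add0n. Qed.

End Pow.

Lemma powS_hom (T U : Type) (op : T -> T -> T) (op' : U -> U -> U) (f : T -> U) :
  (forall x y, f (op x y) = op' (f x) (f y)) ->
  forall x n, f (powS op x n) = powS op' (f x) n.
Proof. by move=> hf x; elim=> //= n <-; rewrite hf. Qed.

Lemma powS_mulC (T : Type) (op : T -> T -> T) (opA : associative op) (opC : commutative op) x y n :
  powS op (op x y) n = op (powS op x n) (powS op y n).
Proof.
elim: n => //= n ->.
rewrite -!opA; congr (op _ _); rewrite [op (powS op y n) _]opC -!opA; congr (op _ _); exact: opC.
Qed.

Lemma wfmin (Q : nat -> Prop) : (exists n, Q n) -> exists n, Q n /\ forall i, (i < n)%N -> ~ Q i.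
Proof.
move=> hq.
have hq' : exists n, `[< Q n >] by case: hq => n qn; exists n; apply/asboolP.
case: (ex_minnP hq') => n /asboolP qn hmin; exists n; split=> // i lin /asboolP /hmin.
by rewrite leqNgt lin.
Qed.

Lemma pigeon (T : Type) (A : set nat) (g : nat -> T) :
  infinite_set A -> finite_set (g @` A) -> exists v, infinite_set (A `&` (g @^-1` [set v])).
Proof.
move=> iA fA; apply: contrapT => hn.
have hall : forall v, finite_set (A `&` (g @^-1` [set v])).
  by move=> v; apply: contrapT => hv; apply: hn; exists v.
apply: iA.
have -> : A = \bigcup_(v in g @` A) (A `&` (g @^-1` [set v])).
  apply/seteqP; split=> [n An|n [v _ [An _]]] //.
  by exists (g n) => //; exists n.
by apply: bigcup_finite => // v _; apply: hall.
Qed.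

Lemma infinite_unbounded (A : set nat) b : infinite_set A -> exists n, A n /\ (b <= n)%N.
Proof.
move=> iA; apply: contrapT => hn; apply: iA.
apply: (@sub_finite_set _ _ `I_b); last exact: finite_II.
move=> n An /=; rewrite ltnNge; apply/negP => hb; apply: hn; by exists n.
Qed.

Lemma ramsey_lite (T : Type) (F : nat -> nat -> T) :
  (forall k, finite_set (range (F k))) ->
  exists (s : nat -> nat) (c : nat -> T),
    (forall n, (s n < s n.+1)%N) /\ (forall n n', (n < n')%N -> F (s n) (s n') = c n).
Proof.
move=> hF.
have step : forall A : set nat, infinite_set A -> exists (k : nat) (v : T) (A' : set nat),
   [/\ A k, infinite_set A' & A' `<=` [set l | A l /\ (k < l)%N /\ F k l = v]].
  move=> A iA; have [k Ak] := infinite_setN0 iA.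
  have iB : infinite_set (A `\` `I_k.+1) by apply: infinite_setD => //; exact: finite_II.
  have [|v iv] := @pigeon _ _ (F k) iB.
    apply: (@sub_finite_set _ _ (range (F k))) => //.
    by move=> y [l _ <-]; exists l.
  exists k, v, ((A `\` `I_k.+1) `&` (F k @^-1` [set v])); split => //.
  by move=> l [[Al /= hl] hv]; split=> //; split=> //; rewrite ltnNge; apply/negP => h; apply: hl.
pose S := {A : set nat | infinite_set A}.
have step' : forall A : S, {p : nat * T * S | sval A p.1.1 /\
    sval p.2 `<=` [set l | sval A l /\ (p.1.1 < l)%N /\ F p.1.1 l = p.1.2]}.
  move=> A; apply: cid.
  have [k [v [A' [h1 h2 h3]]]] := step (sval A) (svalP A).
  by exists (k, v, exist _ A' h2).
pose st := fix st n : S := match n with 0 => exist _ setT infinite_nat | n'.+1 => (sval (step' (st n'))).2 end.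
exists (fun n => (sval (step' (st n))).1.1), (fun n => (sval (step' (st n))).1.2).
have h1 : forall n, sval (st n) ((sval (step' (st n))).1.1) by move=> n; case: (svalP (step' (st n))).
have h2 : forall n, sval (st n.+1) `<=` [set l | sval (st n) l /\ ((sval (step' (st n))).1.1 < l)%N /\
     F (sval (step' (st n))).1.1 l = (sval (step' (st n))).1.2].
  by move=> n; case: (svalP (step' (st n))).
have h3 : forall n d, sval (st (n + d)) `<=` sval (st n).
  move=> n; elim=> [|d IH]; first by rewrite addn0.
  by rewrite addnS => l /h2 [/IH].
split.
  by move=> n; have [_ []] := h2 n _ (h1 n.+1).
move=> n n' lnn'.
have -> : n' = n.+1 + (n' - n.+1) by lia.
by have [_ []] := h2 n _ (h3 n.+1 (n' - n.+1) _ (h1 _)).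
Qed.

Lemma half_cases n : ((n.+1)./2 + (n.+1)./2).+1 = n.+1 \/ ((n.+1)./2 + (n.+1)./2).+1 = n.+2.
Proof. have := odd_double_half n.+1; have := leq_b1 (odd n.+1); rewrite -addnn; lia. Qed.

Lemma half_lt n : ((n.+1)./2 < n.+1)%N.
Proof. have := odd_double_half n.+1; have := leq_b1 (odd n.+1); rewrite -addnn; lia. Qed.

Section Alg.
Context (X : Type) (mul : X -> X -> X) (e : X) (mA : associative mul) (mC : commutative mul)
  (hper : periodic mul) (he : idempotent_el mul e)
  (hune : forall f, idempotent_el mul f -> f = e)
  (hns : forall A : set X, infinite_set A -> ~ (exists z, prodset mul A = [set z])).

Local Notation P := (powS mul).
Local Notation K := [set a | mul a e = e].

Lemma null_fin (A : set X) z : (forall a b, A a -> A b -> mul a b = z) -> finite_set A.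
Proof.
move=> hA; apply: contrapT => iA; apply: (hns _ iA); exists z.
have [a0 Aa0] := infinite_setN0 iA.
apply/seteqP; split=> [y [a [b [Aa Ab ->]]]|y ->] /=; first exact: hA.
by exists a0, a0; split=> //; rewrite hA.
Qed.

Lemma K_e : K e. Proof. exact: he. Qed.
Lemma eK a : K a -> mul e a = e. Proof. by rewrite mC. Qed.
Lemma K_mul a b : K a -> K b -> K (mul a b).
Proof. by move=> ha hb; rewrite /= -mA hb. Qed.
Lemma K_pow a n : K a -> K (P a n).
Proof. by move=> ha; elim: n => //= n IH; exact: K_mul. Qed.

Lemma K_per a : K a -> exists n, P a n = e.
Proof. by move=> _; have [n hn] := hper a; exists n; exact: hune. Qed.

Lemma K_absorb a n N : K a -> P a n = e -> (n <= N)%N -> P a N = e.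
Proof.
move=> ha hn lnN.
have [->|] := eqVneq N n; first done.
move=> neq; have -> : N = (n + (N - n).-1).+1 by lia.
by rewrite powS_add // hn eK //; exact: K_pow.
Qed.

Lemma sq_fin z : K z -> mul z z = e -> finite_set [set mul z y | y in K].
Proof.
move=> hz hzz; apply: (@null_fin _ e) => _ _ [y hy <-] [y' hy' <-].
have -> : mul (mul z y) (mul z y') = mul (mul z z) (mul y y').
  by rewrite -!mA; congr (mul z _); rewrite !mA (mC y z).
by rewrite hzz eK //; exact: K_mul.
Qed.

Lemma pow_distinct a m i j : K a -> P a m = e -> (forall i, (i < m)%N -> P a i <> e) ->
  (i < j)%N -> (j < m)%N -> P a i <> P a j.
Proof.
move=> ha hm hmin lij ljm heq.
have hrep : forall t, P a (i + t * (j - i)) = P a i.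
  elim=> [|t IH]; first by rewrite mul0n addn0.
  have -> : i + t.+1 * (j - i) = ((i + t * (j - i)) + (j - i).-1).+1 by lia.
  rewrite powS_add // IH -powS_add //.
  have -> : (i + (j - i).-1).+1 = j by lia.
  by rewrite heq.
apply: (hmin i (ltn_trans lij ljm)); rewrite -(hrep m).
apply: (K_absorb _ _ _ ha hm); nia.
Qed.

Lemma half_bounds n : (n <= (n./2 + n./2).+1)%N /\ (n./2 + n./2 <= n)%N.
Proof. have := odd_double_half n; have := leq_b1 (odd n); rewrite -addnn; lia. Qed.

Lemma boundK : exists N, forall a, K a -> P a N = e.
Proof.
apply: contrapT => hnb.
have hub : forall N, exists a, K a /\ P a N <> e.
  move=> N; apply: contrapT => h; apply: hnb; exists N => a ha.
  by apply: contrapT => hne; apply: h; exists a.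
have hseq : forall k, exists p : X * nat, [/\ K p.1, P p.1 p.2 = e,
    (forall i, (i < p.2)%N -> P p.1 i <> e) & (k < p.2)%N].
  move=> k; have [a [ha hak]] := hub k.
  have [m [hm hmin]] := @wfmin _ (K_per _ ha).
  exists (a, m); split => //=.
  rewrite ltnNge; apply/negP => hmk; apply: hak; exact: (K_absorb _ _ _ ha hm hmk).
have [xm hxm] := choice hseq.
pose x k := (xm k).1; pose m k := (xm k).2.
have hxK : forall k, K (x k) by move=> k; case: (hxm k).
have hxe : forall k, P (x k) (m k) = e by move=> k; case: (hxm k).
have hxmin : forall k i, (i < m k)%N -> P (x k) i <> e by move=> k; case: (hxm k).
have hkm : forall k, (k < m k)%N by move=> k; case: (hxm k).
have hxabs : forall k t, (m k <= t)%N -> P (x k) t = e.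
  by move=> k t hkt; exact: (K_absorb _ _ _ (hxK k) (hxe k) hkt).
pose h k := (m k)./2.
pose w k := P (x k) (h k).
have hwK : forall k, K (w k) by move=> k; exact: K_pow.
have hww : forall k, mul (w k) (w k) = e.
  move=> k; rewrite /w -powS_add //; apply: hxabs.
  by have [] := half_bounds (m k).
pose F k l := mul (w k) (w l).
have hF : forall k, finite_set (range (F k)).
  move=> k; apply: (sub_finite_set _ (sq_fin _ (hwK k) (hww k))).
  by move=> _ [l _ <-]; exists (w l).
have [s [c [hs hc]]] := @ramsey_lite _ F hF.
have hsn : forall n, (n <= s n)%N.
  elim=> // n IH; exact: (leq_ltn_trans IH (hs n)).
have hAC : forall A B C D, mul (mul A B) (mul C D) = mul (mul A C) (mul B D).
  move=> A B C D; rewrite -!mA; congr (mul A _); by rewrite !mA (mC B C).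
have fC : finite_set (range c).
  apply: (@null_fin _ e) => _ _ [n _ <-] [n' _ <-].
  pose t := (maxn n n').+1.
  rewrite -(hc n t) ?ltnS ?leq_maxl // -(hc n' t) ?ltnS ?leq_maxr //.
  by rewrite /F hAC hww; apply: K_mul.
have [cc icc] := @pigeon _ setT c infinite_nat fC.
pose N1 := setT `&` (c @^-1` [set cc]).
have hN1 : forall n n', N1 n -> N1 n' -> n <> n' -> mul (w (s n)) (w (s n')) = cc.
  move=> n n' [_ hn] [_ hn'] neq.
  have [lnn'|ln'n|//] := ltngtP n n'.
    by rewrite -hn -(hc _ _ lnn').
  by rewrite mC -hn' -(hc _ _ ln'n).
have [n1 hn1] := infinite_setN0 icc.
have hcc : cc = mul (w (s n1)) (w (s n1.+1)).
  by case: hn1 => _ <-; rewrite -(hc n1 n1.+1).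
have hccK : K cc by rewrite hcc; apply: K_mul.
have hcc2 : mul cc cc = e by rewrite hcc hAC !hww.
pose g n := mul cc (x (s n)).
have [dd idd] : exists dd, infinite_set (N1 `&` (g @^-1` [set dd])).
  apply: (@pigeon _ N1 g icc).
  apply: (sub_finite_set _ (sq_fin _ hccK hcc2)).
  by move=> _ [n _ <-]; exists (x (s n)).
pose N2 := N1 `&` (g @^-1` [set dd]).
have hind : forall n n', N2 n -> N2 n' -> forall r,
    mul cc (P (x (s n)) r) = mul cc (P (x (s n')) r).
  move=> n n' [_ hn] [_ hn']; elim=> [|r IH] /=.
    by rewrite [mul cc (x (s n))]hn [mul cc (x (s n'))]hn'.
  have hn2 : mul cc (x (s n)) = dd := hn.
  have hn2' : mul cc (x (s n')) = dd := hn'.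
  rewrite mA IH -mA (mC (P _ r)) mA hn2 -hn2' -mA (mC (x _)).
  by [].
have [n0 hn0] := infinite_setN0 idd.
pose R := m (s n0).
have hR : forall n, N2 n -> mul cc (P (x (s n)) R) = e.
  by move=> n hn; rewrite (hind n n0 hn hn0) hxe.
have hR' : forall n t, N2 n -> (R <= t)%N -> mul cc (P (x (s n)) t) = e.
  move=> n t hn hRt; have [->|neq] := eqVneq t R; first exact: hR.
  have -> : t = (R + (t - R).-1).+1 by lia.
  by rewrite powS_add // mA hR // eK //; apply: K_pow.
pose NN := [set z | exists n a, [/\ N2 n, (h (s n) + R < a)%N & z = P (x (s n)) a]].
have fNN : finite_set NN.
  apply: (@null_fin _ e) => _ _ [n [a [hn ha ->]]] [n' [a' [hn' ha' ->]]].
  have [eqn|neq] := eqVneq n n'.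
    rewrite -eqn in ha' *; rewrite -powS_add //; apply: hxabs.
    have [] := half_bounds (m (s n)); rewrite -/(h (s n)); lia.
  have -> : a = (h (s n) + (a - h (s n)).-1).+1 by lia.
  have -> : a' = (h (s n') + (a' - h (s n')).-1).+1 by lia.
  rewrite !powS_add // -/(w (s n)) -/(w (s n')).
  have -> : forall A B U V, mul (mul A U) (mul B V) = mul (mul (mul A B) U) V.
    by move=> A B U V; rewrite -!mA; congr (mul A _); rewrite mA (mC U B) -mA.
  rewrite (hN1 n n' hn.1 hn'.1 (elimN eqP neq)) (hR' n _ hn); last by lia.
  by rewrite eK //; apply: K_pow.
have [M hM] := (finite_set_leP NN).1 fNN.
have [n [hn hbig]] := @infinite_unbounded _ (2 * (R + M + 2)) idd.
pose k := s n.
have hmk : (2 * (R + M + 2) < m k)%N.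
  exact: (leq_ltn_trans (leq_trans hbig (hsn n)) (hkm k)).
have hhk := half_bounds (m k).
pose gg i := P (x k) (h k + R + 1 + i).
have inj : {in `I_M.+1 &, injective gg}.
  move=> i j /set_mem /= hi /set_mem /= hj hij.
  have [lij|lji|//] := ltngtP i j.
    exfalso; apply: (pow_distinct _ _ _ _ (hxK k) (hxe k) (hxmin k) _ _ hij).
      by lia.
    rewrite /h in hhk *; lia.
  exfalso; apply: (pow_distinct _ _ _ _ (hxK k) (hxe k) (hxmin k) _ _ (esym hij)).
    by lia.
  rewrite /h in hhk *; lia.
have hle : (`I_M.+1 #<= NN)%card.
  rewrite -(card_le_eql (inj_card_eq inj)).
  apply: subset_card_le => _ [i hi <-].
  exists n, (h k + R + 1 + i); split => //; rewrite /k; lia.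
have := card_le_trans hle hM.
by rewrite card_le_II ltnn.
Qed.

Lemma eX_sub x : H_e mul e (mul e x).
Proof.
exists [set y | mul e y = y]; split; last by rewrite /= mA he.
split => /=.
- exact: he.
- by move=> a b ha hb; rewrite mA ha.
- by move=> a ha; rewrite ha mC ha.
- move=> y hy; have [k hk] := hper y; have {}hk := hune _ hk.
  case: k hk => [|k] hk.
    exists e; rewrite /= in hk; rewrite hk; split => //; exact: he.
  exists (mul e (P y k)); split => /=.
  + by rewrite mA he.
  + by rewrite mA (mC y e) -mA powS_comm1 // hk he.
  + by rewrite mC mA (mC y e) -mA powS_comm1 // hk he.
Qed.

Lemma boundX : bounded_group mul e (H_e mul e) -> exists q, forall x, P x q = e.
Proof.
case=> n hn; have [N hN] := boundK.
exists (n * N + n + N) => x.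
rewrite -powS_mulE //; apply: hN => /=.
have := hn _ (eX_sub x); rewrite powS_mulC // powS_idem // => h1.
by rewrite mC.
Qed.

End Alg.

Section Top.
Context (X : Type) (mul : X -> X -> X) (mulA : associative mul) (mulC : commutative mul)
  (hns : forall A : set X, infinite_set A -> ~ (exists z, prodset mul A = [set z]))
  (Y : topologicalType) (m : Y -> Y -> Y) (mA : associative m)
  (mcont : continuous (fun p : Y * Y => m p.1 p.2))
  (T1 : @accessible_space Y) (f : X -> Y) (finj : injective f)
  (fhom : forall x y, f (mul x y) = m (f x) (f y))
  (fdisc : forall x, exists U : set Y, open U /\ U `&` range f = [set f x]).

Lemma nullfin (A : set X) z : (forall a b, A a -> A b -> mul a b = z) -> finite_set A.
Proof.
move=> hA; apply: contrapT => iA; apply: (hns _ iA); exists z.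
have [a0 Aa0] := infinite_setN0 iA.
apply/seteqP; split=> [y [a [b [Aa Ab ->]]]|y ->] /=; first exact: hA.
by exists a0, a0; split=> //; rewrite hA.
Qed.

Lemma mul_nbhs (u v : Y) (W : set Y) : nbhs (m u v) W ->
  exists V1 V2, [/\ nbhs u V1, nbhs v V2 & forall a b, V1 a -> V2 b -> W (m a b)].
Proof.
move=> hW; have := mcont (u, v) _ hW.
case=> [[V1 V2] /= [h1 h2] hsub]; exists V1, V2; split => // a b ha hb.
exact: (hsub (a, b)).
Qed.

Lemma pow_nbhs k (u : Y) (W : set Y) : nbhs (powS m u k) W ->
  exists V, nbhs u V /\ forall a, V a -> W (powS m a k).
Proof.
elim: k W => [|k IH] W /= hW; first by exists W.
have [V1 [V2 [h1 h2 h3]]] := mul_nbhs _ _ _ hW.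
have [V [hV hV']] := IH _ h1.
exists (V `&` V2); split; first exact: filterI.
by move=> a [ha hb]; apply: h3 => //; exact: hV'.
Qed.

Lemma mix_nbhs k (u : Y) (W : set Y) : nbhs (m (powS m u k) u) W ->
  exists V, nbhs u V /\ forall a b, V a -> V b -> W (m (powS m a k) b).
Proof.
move=> hW; have [V1 [V2 [h1 h2 h3]]] := mul_nbhs _ _ _ hW.
have [V [hV hV']] := pow_nbhs _ _ _ h1.
exists (V `&` V2); split; first exact: filterI.
by move=> a b [ha _] [_ hb]; apply: h3 => //; exact: hV'.
Qed.

Lemma sep (y z : Y) : y <> z -> exists A : set Y, [/\ nbhs y A & ~ A z].
Proof.
move=> neq; have [A [oA yA zA]] := T1 y z (introN eqP neq); exists A; split.
  by apply: open_nbhs_nbhs; split => //; exact: set_mem.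
by move=> hz; have := set_mem zA; apply.
Qed.

Lemma cl1 (t p : Y) : (forall B, nbhs t B -> B p) -> t = p.
Proof.
move=> h; apply: contrapT => neq; have [A [hA hpA]] := sep _ _ neq.
exact: hpA (h _ hA).
Qed.

Lemma cl_pow (t : Y) k : closure (range f) t -> closure (range f) (powS m t k).
Proof.
move=> ht B hB; have [V [hV hV']] := pow_nbhs _ _ _ hB.
have [_ [[x _ <-] hx]] := ht _ hV.
exists (powS m (f x) k); split; last exact: hV'.
by exists (powS mul x k) => //; rewrite (@powS_hom _ _ _ _ _ fhom).
Qed.

Lemma cl_eq (t : Y) k (c : Y) : closure (range f) t -> (forall x, powS m (f x) k = c) -> powS m t k = c.
Proof.
move=> ht hc; apply: contrapT => neq; have [A [hA hcA]] := sep _ _ neq.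
have [V [hV hV']] := pow_nbhs _ _ _ hA.
have [_ [[x _ <-] hx]] := ht _ hV.
by apply: hcA; rewrite -(hc x); apply: hV'.
Qed.

Lemma disc c : exists U, nbhs (f c) U /\ forall x, U (f x) -> x = c.
Proof.
have [U [oU hU]] := fdisc c; exists U; split.
  apply: open_nbhs_nbhs; split => //.
  have : (U `&` range f) (f c) by rewrite hU.
  by case.
move=> x hx; apply: finj.
have : (U `&` range f) (f x) by split => //; exists x.
by rewrite hU.
Qed.

Lemma L1 (t : Y) c : closure (range f) t -> m t t = f c -> range f t.
Proof.
move=> ht htt; apply: contrapT => hnot.
have [U [hU hUc]] := disc c.
rewrite -htt in hU; have [V1 [V2 [h1 h2 h3]]] := mul_nbhs _ _ _ hU.
pose V := V1 `&` V2.
pose A := f @^-1` V.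
have hA : forall a b, A a -> A b -> mul a b = c.
  move=> a b [ha1 ha2] [hb1 hb2]; apply: hUc; rewrite fhom; exact: h3.
have fA := nullfin _ _ hA.
have cA : closed (f @` A) := (accessible_finite_set_closed.1 T1) _ (finite_image _ fA).
have hN : nbhs t (V `&` ~` (f @` A)).
  apply: filterI; first exact: filterI.
  apply: open_nbhs_nbhs; split; first by rewrite openC.
  by move=> [a _ hat]; apply: hnot; exists a.
have [_ [[x _ <-] [hxV hxA]]] := ht _ hN.
by apply: hxA; exists x.
Qed.

Lemma Pa (t : Y) k c : closure (range f) t -> powS m t k.+1 = f c -> range f (powS m t k.+2).
Proof.
move=> ht hc.
have [U [hU hUc]] := disc c.
rewrite -hc /= in hU.
have [V [hV hV']] := mix_nbhs _ _ _ hU.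
pose A := f @^-1` V.
have hA : forall a b, A a -> A b -> mul (powS mul a k) b = c.
  move=> a b ha hb; apply: hUc; rewrite fhom (@powS_hom _ _ _ _ _ fhom); exact: hV'.
have [_ [[a0 _ <-] ha0]] := ht _ hV.
exists (mul c a0) => //; apply: esym; apply: cl1 => B hB.
have [V' [hV'1 hV'2]] := pow_nbhs _ _ _ hB.
have [_ [[a _ <-] [haV haV']]] := ht _ (filterI hV hV'1).
have heq : powS mul a k.+2 = mul c a0.
  change (mul (mul (powS mul a k) a) a = mul c a0).
  rewrite (hA a a haV haV) -[in LHS](hA a a0 haV ha0) -mulA (mulC a0 a) mulA (hA a a haV haV).
  by [].
by rewrite -heq (@powS_hom _ _ _ _ _ fhom); exact: hV'2.
Qed.

Lemma PP (t : Y) k c : closure (range f) t -> powS m t k = f c -> range f t.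
Proof.
elim/ltn_ind: k c t => k IH c t ht hc.
case: k IH hc => [|k] IH hc; first by exists c.
pose j := (k.+1)./2.
have hv : range f (powS m t (j + j).+1).
  have [->|->] := half_cases k; first by exists c.
  exact: Pa _ _ _ ht hc.
have [c' _ hc'] := hv.
have hvv : m (powS m t j) (powS m t j) = f c' by rewrite hc' powS_add.
have [c'' _ hc''] := L1 _ _ (cl_pow _ j ht) hvv.
exact: (IH j (half_lt k) c'' t ht (esym hc'')).
Qed.

Lemma closed_range q e : (forall x, powS mul x q = e) -> closed (range f).
Proof.
move=> hq t ht; apply: (PP _ q e ht).
by apply: cl_eq => // x; rewrite -(@powS_hom _ _ _ _ _ fhom) hq.
Qed.
End Top.

Theorem lemma4p3 (X : Type) (mul : X -> X -> X) (e : X) :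
  associative mul -> commutative mul ->
  periodic mul ->
  idempotent_el mul e ->
  (forall f, idempotent_el mul f -> f = e) ->
  bounded_group mul e (H_e mul e) ->
  (forall A : set X, infinite_set A -> ~ (exists z, prodset mul A = [set z])) ->
  T1S_closed mul.
Proof.
move=> mA mC hper he hune hb hns.
have [q hq] := @boundX X mul e mA mC hper he hune hns hb.
move=> Y m mA' mcont T1 f finj fhom fdisc.
exact: (@closed_range X mul mA mC hns Y m mA' mcont T1 f finj fhom fdisc q e hq).
Qed.
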